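(* Let $n = 2$, $\mathsf{AP}^I_L = \{i\}$ and $\mathsf{AP}^O = \{o\}$, so that $\mathcal{I} = 2^{\{i\}\times\{0,1\}}$ and $\mathcal{O} = 2^{\{o\}\times\{0,1\}}$. The set of all computation trees $\tau : \mathcal{I}^* \to \mathcal{O}$ that have the symmetry property is not a regular tree language.
   Context: For $u \subseteq \mathsf{AP}\times\{0,1\}$ and $k\in\mathbb{Z}$, $\mathrm{rot}(u,k) = \{(p,(j+k)\bmod 2) \mid (p,j)\in u\}$ (modulo always returns a value in $\{0,1\}$), extended letterwise to words. A computation tree is a map $\tau : \mathcal{I}^* \to \mathcal{O}$. It has the symmetry property if $\tau(\mathrm{rot}(t,k)) = \mathrm{rot}(\tau(t),k)$ for all $t\in\mathcal{I}^*$ and $k\in\{0,1\}$. A set of such trees is a regular tree language if it is the language of some finite tree automaton (e.g., with Muller acceptance condition) over $\mathcal{I}$-branching, $\mathcal{O}$-labelled infinite trees. *)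

(* Defs.v *)
From HB Require Import structures.
From mathcomp Require Import all_boot.
Set Implicit Arguments. Unset Strict Implicit. Unset Printing Implicit Defensive.

Inductive APi := ap_i.
Inductive APo := ap_o.
Definition APi_code (x : APi) : unit := tt.
Definition APi_decode (_ : unit) : APi := ap_i.
Lemma APi_codeK : cancel APi_code APi_decode. Proof. by case. Qed.
Definition APo_code (x : APo) : unit := tt.
Definition APo_decode (_ : unit) : APo := ap_o.
Lemma APo_codeK : cancel APo_code APo_decode. Proof. by case. Qed.
HB.instance Definition _ := Finite.copy APi (can_type APi_codeK).
HB.instance Definition _ := Finite.copy APo (can_type APo_codeK).

(* n = 2 : indices in {0,1} = 'I_2 *)
Definition rotj (k : nat) (j : 'I_2) : 'I_2 :=
  Ordinal (ltn_pmod (j + k) (isT : 0 < 2)).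

Definition rot (A : finType) (u : {set A * 'I_2}) (k : nat) : {set A * 'I_2} :=
  [set (x.1, rotj k x.2) | x in u].

Definition Inp := {set APi * 'I_2}.
Definition Outp := {set APo * 'I_2}.

Definition comp_tree := seq Inp -> Outp.

Definition rot_word (t : seq Inp) (k : nat) : seq Inp := map (fun u => rot u k) t.

Definition symmetry_property (tau : comp_tree) : Prop :=
  forall (t : seq Inp) (k : nat), k < 2 -> tau (rot_word t k) = rot (tau t) k.

(* Nondeterministic Muller tree automata over I-branching, O-labelled trees *)
Record muller_tree_aut := MTA {
  mta_state : finType;
  mta_init : mta_state;
  mta_delta : mta_state -> Outp -> {ffun Inp -> mta_state} -> bool;
  mta_table : {set {set mta_state}}
}.
Arguments mta_state : clear implicits.
Arguments mta_init : clear implicits.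
Arguments mta_table : clear implicits.
Arguments mta_delta : clear implicits.

Definition is_run (A : muller_tree_aut) (tau : comp_tree)
    (r : seq Inp -> mta_state A) : Prop :=
  r [::] = mta_init A /\
  forall w : seq Inp, mta_delta A (r w) (tau w) [ffun a => r (rcons w a)].

Definition prefix (pi : nat -> Inp) (m : nat) : seq Inp := mkseq pi m.

Definition inf_often (Q : Type) (r : seq Inp -> Q) (pi : nat -> Inp) (q : Q) : Prop :=
  forall N, exists m, N <= m /\ r (prefix pi m) = q.

Definition accepting_run (A : muller_tree_aut) (r : seq Inp -> mta_state A) : Prop :=
  forall pi : nat -> Inp, exists S, S \in mta_table A /\
    forall q, q \in S <-> inf_often r pi q.

Definition accepts (A : muller_tree_aut) (tau : comp_tree) : Prop :=
  exists r, @is_run A tau r /\ @accepting_run A r.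

Definition regular_tree_language (L : comp_tree -> Prop) : Prop :=
  exists A : muller_tree_aut, forall tau, accepts A tau <-> L tau.

(* Main.v *)
Require Import Defs.
From mathcomp Require Import all_boot.

Definition a0 : Inp := [set (ap_i, ord0)].
Definition tau_n (n : nat) : comp_tree := fun w => if size w == n.+1 then setT else set0.

Lemma rot0 (A : finType) k : Defs.rot (set0 : {set A * 'I_2}) k = set0.
Proof. by rewrite /Defs.rot imset0. Qed.

Lemma rotT (A : finType) k : k < 2 -> Defs.rot (setT : {set A * 'I_2}) k = setT.
Proof.
move=> hk; apply/setP => -[p j]; rewrite in_setT; apply/imsetP.
case: k hk => [|[|//]] _.
  by exists (p, j) => //; congr pair; apply/val_inj; rewrite /= addn0 modn_small.
exists (p, rotj 1 j); rewrite ?in_setT //; congr pair; apply/val_inj.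
by case: j => [[|[|//]]].
Qed.

Lemma tau_sym n : symmetry_property (tau_n n).
Proof.
move=> t k hk; rewrite /tau_n /rot_word size_map.
by case: ifP => _; [rewrite rotT | rewrite rot0].
Qed.

Lemma rot_a0 : (Defs.rot a0 1 == a0) = false.
Proof.
apply/negbTE/negP => /eqP H.
have : (ap_i, ord0) \in Defs.rot a0 1 by rewrite H set11.
by rewrite /Defs.rot /a0 imset_set1 inE.
Qed.

Lemma inf_ext (Q : Type) (r r' : seq Inp -> Q) pi q :
  (forall m, r (Defs.prefix pi m.+1) = r' (Defs.prefix pi m.+1)) ->
  inf_often r pi q <-> inf_often r' pi q.
Proof.
move=> Hr; split=> H N; have [m [Hm E]] := H N.+1; exists m; split;
  (try exact: ltnW); case: m Hm E => // m _ E; by rewrite -?Hr ?Hr in E *.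
Qed.

Theorem lemma6 : ~ regular_tree_language symmetry_property.
Proof.
move=> [A HA].
have Hex : forall n : 'I_(#|mta_state A|.+1), exists q, exists r,
    @is_run A (tau_n n) r /\ accepting_run r /\ r [:: a0] = q.
  move=> n; have [r [Hr Ha]] := proj2 (HA (tau_n n)) (tau_sym n).
  by exists (r [:: a0]), r.
have [f Hf] := fin_all_exists Hex.
have [i [j [nij Eij]]] : exists i, exists j, (i != j) /\ f i = f j.
  case: (pickP [pred ij : 'I_(#|mta_state A|.+1) * 'I_(#|mta_state A|.+1) |
              (f ij.1 == f ij.2) && (ij.1 != ij.2)]) => [[i j] /andP [/eqP e n] | H].
    by exists i, j.
  have inj : injective f.
    move=> x y e; apply/eqP; have := H (x, y); rewrite /= e eqxx /=.
    by move/negbT; rewrite negbK.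
  by have := leq_card _ inj; rewrite card_ord ltnn.
have [r1 [Hr1 [Ha1 E1]]] := Hf i.
have [r2 [Hr2 [Ha2 E2]]] := Hf j.
pose h : comp_tree := fun w => match w with
  | x :: _ => if x == a0 then tau_n j w else tau_n i w
  | [::] => tau_n i w end.
pose R := fun w => match w with
  | x :: _ => if x == a0 then r2 w else r1 w
  | [::] => r1 w end.
have acc : accepts A h.
  exists R; split.
    split; first exact: Hr1.1.
    case=> [|x w].
      have -> : [ffun c => R (rcons [::] c)] = [ffun c => r1 [:: c]].
        apply/ffunP => c; rewrite !ffunE /=; case: ifP => // /eqP ->.
        by rewrite E1 E2 Eij.
      exact: (Hr1.2 [::]).
    rewrite /R /h /=; case: (x == a0); [exact: (Hr2.2 (x :: w)) | exact: (Hr1.2 (x :: w))].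
  move=> pi; case Hp: (pi 0 == a0).
    have [S0 [HS HS']] := Ha2 pi; exists S0; split => // q; apply: iff_trans (HS' q) _; apply: iff_sym.
    by apply: inf_ext => m; rewrite /R /Defs.prefix /mkseq /= Hp.
  have [S0 [HS HS']] := Ha1 pi; exists S0; split => // q; apply: iff_trans (HS' q) _; apply: iff_sym.
  by apply: inf_ext => m; rewrite /R /Defs.prefix /mkseq /= Hp.
have Hs := proj1 (HA h) acc (a0 :: nseq j a0) 1 isT.
move: Hs; rewrite /h /= rot_a0 eqxx /tau_n /rot_word /= size_map size_nseq eqxx.
have -> : (j.+1 == i.+1) = false by apply/negbTE; rewrite eqSS eq_sym.
rewrite rotT // => /setP /(_ (ap_o, ord0)).
by rewrite !inE.
Qed.
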